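(* The $0$-Bruhat order on $\mathcal B_\infty$ is the order induced from the $0$-Bruhat order on $\mathcal S_{\pm\infty}$ via the inclusion $\mathcal B_\infty\hookrightarrow\mathcal S_{\pm\infty}$: for $u,w\in\mathcal B_\infty$, $u\le_0 w$ if and only if $u\trianglelefteq_0 w$.
   Context: Write $\bar i:=-i$. $\mathcal S_{\pm\infty}$ is the group of permutations of $\pm\mathbb N=\{\dots,\bar2,\bar1,1,2,\dots\}$ moving finitely many elements, with length $l(w)=\#\{(a,b):a<b,\ w(a)>w(b)\}$ (usual order on $\pm\mathbb N$). Its $0$-Bruhat order $\trianglelefteq_0$ is generated by covers $u\,\triangleleft\!\cdot_0\, w$ meaning $l(w)=l(u)+1$ and $w=u\,(a,b)$ for a transposition $(a,b)$ with $a<0<b$. $\mathcal B_n\subset\mathcal S_{\pm\infty}$ consists of permutations $w$ of $\pm[n]$ with $w(\bar a)=\overline{w(a)}$ (fixing everything else), $\mathcal B_\infty=\bigcup_n\mathcal B_n$, with length $\ell(w)=\#\{(i,j):0<i<j,w(i)>w(j)\}+\sum_{i>0,w(i)<0}|w(i)|$; its $0$-Bruhat order $\le_0$ is generated by covers $u\lessdot_0w$: $\ell(w)=\ell(u)+1$ and $u^{-1}w\in\{(\bar j,j),\ (\bar j,i)(\bar i,j):0<i<j\}$. *)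

(* Defs.v *)
From mathcomp Require Import all_boot all_order all_algebra.
Set Implicit Arguments. Unset Strict Implicit. Unset Printing Implicit Defensive.
Import Order.TTheory GRing.Theory Num.Theory.
Local Open Scope ring_scope.

(* Elements of S_{+-oo}: permutations of +-N = Z \ {0}, modelled as injective
   maps int -> int fixing 0 and every x with |x| > sbound (finite support).
   (Injective + fixing everything outside [-N,N] forces a bijection of int,
   which restricts to a bijection of Z \ {0} since 0 is fixed.) *)
Record sperm := SPerm {
  sfun :> int -> int;
  sbound : nat;
  sfun0 : sfun 0 = 0;
  sfun_inj : injective sfun;
  sfun_supp : forall x : int, (sbound < absz x)%N -> sfun x = x }.

Definition rng (N : nat) : seq int :=
  [seq x <- [seq (i%:Z - N%:Z) | i <- iota 0 (N.*2.+1)] | x != 0].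
Definition posr (N : nat) : seq int := [seq i%:Z | i <- iota 1 N].

(* number of inversions of w among pairs in rng N; independent of N once N
   bounds the support of w *)
Definition invS (w : int -> int) (N : nat) : nat :=
  count (fun p : int * int => (p.1 < p.2) && (w p.2 < w p.1))
        [seq (a, b) | a <- rng N, b <- rng N].

Definition lenS (w : sperm) : nat := invS w (sbound w).

Definition transp (a b : int) (x : int) : int :=
  if x == a then b else if x == b then a else x.

Definition coverS (u w : sperm) : Prop :=
  lenS w = (lenS u).+1 /\
  exists a b : int, a < 0 < b /\ forall x, w x = u (transp a b x).

Inductive leS0 : sperm -> sperm -> Prop :=
| leS0_refl u w : sfun u =1 sfun w -> leS0 u w
| leS0_step u v w : leS0 u v -> coverS v w -> leS0 u w.

Definition isB (w : sperm) : Prop := forall x : int, w (- x) = - w x.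

Definition lenB (w : sperm) : nat :=
  count (fun p : int * int => (p.1 < p.2) && (w p.2 < w p.1))
        [seq (i, j) | i <- posr (sbound w), j <- posr (sbound w)]
  + \sum_(i <- posr (sbound w) | w i < 0) absz (w i).

Definition coverB (u w : sperm) : Prop :=
  [/\ isB u, isB w, lenB w = (lenB u).+1 &
   (exists j : int, 0 < j /\ forall x, w x = u (transp (- j) j x)) \/
   (exists i j : int, 0 < i < j /\
      forall x, w x = u (transp (- j) i (transp (- i) j x)))].

Inductive leB0 : sperm -> sperm -> Prop :=
| leB0_refl u w : sfun u =1 sfun w -> leB0 u w
| leB0_step u v w : leB0 u v -> coverB v w -> leB0 u w.

(* Main.v *)
Require Import Defs.
From mathcomp Require Import all_boot all_order all_algebra.
From mathcomp Require Import zify.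
Set Implicit Arguments. Unset Strict Implicit. Unset Printing Implicit Defensive.
Import Order.TTheory GRing.Theory Num.Theory.
Local Open Scope ring_scope.

Definition fixo (f : int -> int) (N : nat) := forall x : int, (N < absz x)%N -> f x = x.

Lemma sperm_fixo (u : sperm) N : (sbound u <= N)%N -> fixo u N.
Proof. move=> hN x hx; apply: sfun_supp; lia. Qed.

Lemma sperm_range (u : sperm) N x : fixo u N -> (absz x <= N)%N -> (absz (u x) <= N)%N.
Proof.
move=> hf hx; rewrite leqNgt; apply/negP=> h.
have := hf _ h => /(@sfun_inj u) e. rewrite e in h. lia.
Qed.

Definition dom (N : nat) : seq int := [seq (i%:Z - N%:Z) | i <- iota 0 N.*2.+1].

Lemma mem_dom N x : (x \in dom N) = (absz x <= N)%N.
Proof.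
apply/mapP/idP.
  by case=> i; rewrite mem_iota => hi ->; lia.
move=> hx; exists (absz (x + N%:Z)); last by lia.
rewrite mem_iota; lia.
Qed.

Lemma uniq_dom N : uniq (dom N).
Proof.
rewrite map_inj_uniq ?iota_uniq // => i j /= h. lia.
Qed.

Lemma size_dom N : size (dom N) = N.*2.+1.
Proof. by rewrite size_map size_iota. Qed.

Lemma sperm_surj (u : sperm) y : exists x, u x = y.
Proof.
set N := sbound u.
have hf : fixo u N by apply: sperm_fixo.
case: (leqP (absz y) N) => hy; last by exists y; apply: hf.
have sub : {subset map u (dom N) <= dom N}.
  by move=> z /mapP [x]; rewrite !mem_dom => hx ->; apply: sperm_range.
have un : uniq (map u (dom N)) by rewrite map_inj_uniq ?uniq_dom //; apply: sfun_inj.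
have [_ e] := uniq_min_size un sub (eq_leq (esym (size_map u (dom N)))).
have : y \in map u (dom N) by rewrite e mem_dom.
by case/mapP=> x _ ->; exists x.
Qed.

Lemma mem_rng N x : (x \in rng N) = (x != 0) && (absz x <= N)%N.
Proof. by rewrite mem_filter -mem_dom. Qed.

Lemma uniq_rng N : uniq (rng N).
Proof. by rewrite filter_uniq // uniq_dom. Qed.

Lemma mem_posr N x : (x \in posr N) = (0 < x) && (absz x <= N)%N.
Proof.
apply/mapP/idP.
  by case=> i; rewrite mem_iota => hi ->; lia.
move=> hx; exists (absz x); last by lia.
rewrite mem_iota; lia.
Qed.

Lemma uniq_posr N : uniq (posr N).
Proof. rewrite map_inj_uniq ?iota_uniq // => i j /= h. lia. Qed.

Definition J (f : int -> int) (x y : int) : nat := (x < y) && (f y < f x).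
Definition inv_on (f : int -> int) (s : seq int) : nat :=
  (\sum_(x <- s) \sum_(y <- s) J f x y)%N.

Lemma count_sum T (P : pred T) s : count P s = (\sum_(x <- s) (P x : nat))%N.
Proof. by elim: s => [|x s IH]; rewrite ?big_nil ?big_cons //= IH. Qed.

Lemma count_pairs (P : int -> int -> bool) s t :
  count (fun p : int * int => P p.1 p.2) [seq (a, b) | a <- s, b <- t] =
  (\sum_(x <- s) \sum_(y <- t) (P x y : nat))%N.
Proof.
rewrite count_sum big_allpairs; apply: eq_bigr => x _; by [].
Qed.

Lemma invS_on f N : invS f N = inv_on f (rng N).
Proof. exact: (count_pairs (fun x y => (x < y) && (f y < f x))). Qed.

Lemma sum_restr (s t : seq int) (P : pred int) (F : int -> nat) :
  uniq s -> uniq t -> (forall x, (x \in t) = (x \in s) && P x) ->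
  (forall x, x \in s -> ~~ P x -> F x = 0%N) ->
  (\sum_(x <- s) F x = \sum_(x <- t) F x)%N.
Proof.
move=> us ut ht hF.
rewrite (bigID P) /= [X in (_ + X)%N]big1_seq ?addn0; last first.
  by move=> x /andP [h1 h2]; apply: hF.
rewrite -big_filter; apply: perm_big; apply: uniq_perm; rewrite ?filter_uniq //.
by move=> x; rewrite mem_filter ht andbC.
Qed.

Lemma fixo_range (u : sperm) N x : fixo u N -> (absz x <= N)%N -> (absz (u x) <= N)%N.
Proof.
move=> hf hx; rewrite leqNgt; apply/negP=> h.
have := hf _ h => /(@sfun_inj u) e. rewrite e in h. lia.
Qed.

Lemma J0r (u : sperm) M x y : fixo u M -> (M < absz y)%N -> J u x y = 0%N.
Proof.
move=> hf hy; rewrite /J (hf _ hy).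
suff -> : ((x < y) && (y < u x)) = false by [].
apply/negbTE/negP => /andP [h1 h2].
case: (leqP (absz x) M) => hx.
  have := fixo_range hf hx; lia.
move: h2; rewrite (hf _ hx); lia.
Qed.

Lemma J0l (u : sperm) M x y : fixo u M -> (M < absz y)%N -> J u y x = 0%N.
Proof.
move=> hf hy; rewrite /J (hf _ hy).
suff -> : ((y < x) && (u x < y)) = false by [].
apply/negbTE/negP => /andP [h1 h2].
case: (leqP (absz x) M) => hx.
  have := fixo_range hf hx; lia.
move: h2; rewrite (hf _ hx); lia.
Qed.

Lemma inv_on_rng (u : sperm) M N : fixo u M -> (M <= N)%N ->
  inv_on u (rng N) = inv_on u (rng M).
Proof.
move=> hf hMN; rewrite /inv_on.
have ht : forall x, (x \in rng M) = (x \in rng N) && (absz x <= M)%N.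
  move=> x; rewrite !mem_rng; apply/idP/idP; [move=> /andP[]|move=>/andP[/andP[]]]; lia.
rewrite (sum_restr (P := fun x => (absz x <= M)%N) (uniq_rng N) (uniq_rng M) ht); last first.
  move=> x _ hx; apply: big1_seq => y _; apply: (J0l y hf); lia.
apply: eq_bigr => x _.
apply: (sum_restr (P := fun x => (absz x <= M)%N) (uniq_rng N) (uniq_rng M) ht).
move=> y _ hy; apply: (J0r x hf); lia.
Qed.

Lemma lenS_on (u : sperm) N : (sbound u <= N)%N -> lenS u = inv_on u (rng N).
Proof.
move=> h; rewrite /lenS invS_on (inv_on_rng (M := sbound u)) //.
by apply: sperm_fixo.
Qed.

Lemma inv_on_perm f s t : perm_eq s t -> inv_on f s = inv_on f t.
Proof.
move=> h; rewrite /inv_on (perm_big _ h); apply: eq_bigr => x _.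
exact: perm_big.
Qed.

Lemma perm_ab (s : seq int) a b : uniq s -> a \in s -> b \in s -> a != b ->
  perm_eq s (a :: b :: [seq x <- s | (x != a) && (x != b)]).
Proof.
move=> us ha hb hab; apply: uniq_perm => //.
  rewrite /= !mem_filter !eqxx /= andbF /= filter_uniq // andbT.
  by rewrite inE negb_or hab /= mem_filter eqxx.
move=> x; rewrite !inE mem_filter.
case: (eqVneq x a) => [->|hxa] /=; first by rewrite ha.
by case: (eqVneq x b) => [->|hxb] /=; rewrite ?hb ?andbT.
Qed.

Definition between (u : int -> int) a b c : bool := (a < c < b) && (u a < u c < u b).

Lemma ptwise (u : int -> int) a b c : a < b -> u a < u b -> c != a -> c != b ->
  u c != u a -> u c != u b ->
  (J (fun x => u (transp a b x)) a c + J (fun x => u (transp a b x)) b c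
   + J (fun x => u (transp a b x)) c a + J (fun x => u (transp a b x)) c b
   = J u a c + J u b c + J u c a + J u c b + 2 * between u a b c)%N.
Proof.
move=> hab huab hca hcb huca hucb.
rewrite /J /between /transp !eqxx (negbTE hca) (negbTE hcb).
have -> : (b == a) = false by apply/negbTE; move: hab; rewrite lt_def eq_sym => /andP[].
move: hca hcb huca hucb.
case: (ltgtP a c) => h1; case: (ltgtP b c) => h2; case: (ltgtP (u a) (u c)) => h3;
  case: (ltgtP (u b) (u c)) => h4 //=; lia.
Qed.

Lemma inv_on_expand f a b s' :
  inv_on f (a :: b :: s') =
  (J f a a + J f a b + J f b a + J f b b +
   \sum_(c <- s') (J f a c + J f b c + J f c a + J f c b) +
   \sum_(x <- s') \sum_(y <- s') J f x y)%N.
Proof.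
rewrite /inv_on; under eq_bigr => x _ do rewrite !big_cons.
rewrite !big_cons !big_split /=.
lia.
Qed.

Lemma Jaa f a : J f a a = 0%N.
Proof. by rewrite /J ltxx. Qed.

Lemma L1 (u : int -> int) s a b : uniq s -> a \in s -> b \in s -> a < b ->
  injective u -> u a < u b ->
  inv_on (fun x => u (transp a b x)) s = (inv_on u s + 1 + 2 * count (between u a b) s)%N.
Proof.
move=> us ha hb hab inj huab.
have nab : a != b by rewrite lt_eqF.
have P := perm_ab us ha hb nab.
rewrite !(inv_on_perm _ P) (permP P) !inv_on_expand !Jaa /=.
set s' := [seq x <- s | _].
have hs' : forall x, x \in s' -> (x != a) && (x != b).
  by move=> x; rewrite mem_filter => /andP[].
have tr : forall x, x \in s' -> transp a b x = x.
  by move=> x /hs' /andP [h1 h2]; rewrite /transp (negbTE h1) (negbTE h2).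
have -> : (\sum_(x <- s') \sum_(y <- s') J (fun x0 : int => u (transp a b x0)) x y =
          \sum_(x <- s') \sum_(y <- s') J u x y)%N.
  apply: eq_big_seq => x hx; apply: eq_big_seq => y hy.
  by rewrite /J (tr _ hx) (tr _ hy).
have -> : (\sum_(c <- s') (J (fun x : int => u (transp a b x)) a c +
            J (fun x : int => u (transp a b x)) b c +
            J (fun x : int => u (transp a b x)) c a +
            J (fun x : int => u (transp a b x)) c b) =
          \sum_(c <- s') (J u a c + J u b c + J u c a + J u c b + 2 * between u a b c))%N.
  apply: eq_big_seq => c hc; have /andP [h1 h2] := hs' _ hc.
  rewrite ptwise //.
    by apply/negP => /eqP /inj /eqP; apply/negP.
  by apply/negP => /eqP /inj /eqP; apply/negP.
rewrite big_split /= count_sum.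
have -> : (\sum_(c <- s') 2 * between u a b c = 2 * \sum_(c <- s') between u a b c)%N.
  by rewrite big_distrr.
have -> : between u a b a = false by rewrite /between ltxx.
have -> : between u a b b = false by rewrite /between ltxx /= andbF.
have nba : (b == a) = false by rewrite eq_sym (negbTE nab).
have -> : J (fun x => u (transp a b x)) a b = 1%N.
  by rewrite /J /transp eqxx nba eqxx hab huab.
have -> : J (fun x => u (transp a b x)) b a = 0%N by rewrite /J (lt_gtF hab).
have -> : J u a b = 0%N by rewrite /J hab (lt_gtF huab).
have -> : J u b a = 0%N by rewrite /J (lt_gtF hab).
rewrite /=; lia.
Qed.

Lemma transpK a b x : transp a b (transp a b x) = x.
Proof.
rewrite /transp.
case: (eqVneq x a) => [->|xa].
  by case: (eqVneq b a) => [->|ba]; rewrite ?eqxx.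
case: (eqVneq x b) => [->|xb]; first by rewrite eqxx.
by rewrite (negbTE xa) (negbTE xb).
Qed.

Lemma transp_inj a b : injective (transp a b).
Proof. exact: (can_inj (transpK a b)). Qed.

Lemma transp_a a b : transp a b a = b.
Proof. by rewrite /transp eqxx. Qed.
Lemma transp_b a b : transp a b b = a.
Proof. by rewrite /transp eqxx; case: (eqVneq b a) => [->|]. Qed.
Lemma transp_o a b x : x != a -> x != b -> transp a b x = x.
Proof. by move=> h1 h2; rewrite /transp (negbTE h1) (negbTE h2). Qed.

Lemma exS (u : sperm) a b : a != 0 -> b != 0 ->
  exists v : sperm, (forall x, v x = u (transp a b x)) /\
                    sbound v = maxn (sbound u) (maxn (absz a) (absz b)).
Proof.
move=> a0 b0.
set N := maxn (sbound u) (maxn (absz a) (absz b)).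
have h0 : u (transp a b 0) = 0.
  by rewrite transp_o ?sfun0 // eq_sym.
have hi : injective (fun x => u (transp a b x)).
  by move=> x y /(@sfun_inj u) /transp_inj.
have hs : forall x : int, (N < absz x)%N -> u (transp a b x) = x.
  move=> x hx; rewrite transp_o; first (apply: sfun_supp; lia).
    by apply/eqP => e; subst x; lia.
  by apply/eqP => e; subst x; lia.
by exists (@SPerm (fun x => u (transp a b x)) N h0 hi hs).
Qed.

Definition bigN (u w : sperm) (a b : int) :=
  maxn (sbound u) (maxn (sbound w) (maxn (absz a) (absz b))).

Lemma LS_pos (u w : sperm) a b : a < b -> a != 0 -> b != 0 ->
  (forall x, w x = u (transp a b x)) -> u a < u b ->
  lenS w = (lenS u + 1 + 2 * count (between u a b) (rng (bigN u w a b)))%N.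
Proof.
move=> hab a0 b0 hw huab.
rewrite (lenS_on (u := w) (N := bigN u w a b)); last by rewrite /bigN; lia.
rewrite (lenS_on (u := u) (N := bigN u w a b)); last by rewrite /bigN; lia.
rewrite -(L1 (uniq_rng _) _ _ hab (@sfun_inj u) huab); first last.
- by rewrite mem_rng b0 /bigN; lia.
- by rewrite mem_rng a0 /bigN; lia.
rewrite /inv_on; apply: eq_bigr => x _; apply: eq_bigr => y _.
by rewrite /J !hw.
Qed.

Lemma LS_neg (u w : sperm) a b : a < b -> a != 0 -> b != 0 ->
  (forall x, w x = u (transp a b x)) -> u b < u a ->
  lenS u = (lenS w + 1 + 2 * count (between w a b) (rng (bigN w u a b)))%N.
Proof.
move=> hab a0 b0 hw huab.
apply: LS_pos => //.
  by move=> x; rewrite hw transpK.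
by rewrite !hw transp_a transp_b.
Qed.

Definition Cond (u w : int -> int) :=
  [/\ (forall x, x < 0 -> u x <= w x), (forall x, 0 < x -> w x <= u x) &
      (forall x y, (x < y < 0) || (0 < x < y) -> u x < u y -> w x < w y)].

Lemma Cond_refl (u w : int -> int) : u =1 w -> Cond u w.
Proof.
move=> e; split=> [x _|x _|x y _]; rewrite ?e //.
Qed.

Lemma Cond_trans (u v w : int -> int) : Cond u v -> Cond v w -> Cond u w.
Proof.
case=> h1 h2 h3 [k1 k2 k3]; split.
- move=> x hx; exact: le_trans (h1 x hx) (k1 x hx).
- move=> x hx; exact: le_trans (k2 x hx) (h2 x hx).
- move=> x y hxy e; exact: (k3 x y hxy (h3 x y hxy e)).
Qed.

Lemma cover_cond (u w : sperm) : coverS u w -> Cond u w.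
Proof.
case=> hl [a [b [/andP [ha hb] hw]]].
have a0 : a != 0 by lia.
have b0 : b != 0 by lia.
have hab : a < b by lia.
have uneq : forall x y, x != y -> u x != u y.
  by move=> x y nxy; apply/negP => /eqP /(@sfun_inj u) /eqP; apply/negP.
have nab : a != b by lia.
case: (ltgtP (u a) (u b)) => huab; last first.
- by move/eqP: huab; rewrite (negbTE (uneq _ _ nab)).
- have := LS_neg hab a0 b0 hw huab; lia.
have := LS_pos hab a0 b0 hw huab; rewrite hl => e.
have c0 : count (between u a b) (rng (bigN u w a b)) = 0%N by lia.
have nb : forall c, c != 0 -> a < c < b -> ~~ between u a b c.
  move=> c hc hc2; move: c0 => /eqP; rewrite -leqn0 leqNgt -has_count => /hasPn; apply.
  by rewrite mem_rng hc /bigN; lia.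
have wa : w a = u b by rewrite hw transp_a.
have wb : w b = u a by rewrite hw transp_b.
have wo : forall x, x != a -> x != b -> w x = u x by move=> x h1 h2; rewrite hw transp_o.
split.
- move=> x hx; case: (eqVneq x a) => [->|xa]; first by rewrite wa; lia.
  by rewrite wo //; lia.
- move=> x hx; case: (eqVneq x b) => [->|xb]; first by rewrite wb; lia.
  by rewrite wo //; lia.
move=> x y hxy hu.
case: (eqVneq x a) => [ex|xa].
  subst x; rewrite wa wo; [|lia|lia].
  have := nb y ltac:(lia) ltac:(lia); have := uneq y b ltac:(lia); rewrite /between; lia.
case: (eqVneq y a) => [ey|ya].
  subst y; rewrite wa wo //; [|lia]; lia.
case: (eqVneq x b) => [ex|xb].
  subst x; rewrite wb wo //; [|lia]; lia.
case: (eqVneq y b) => [ey|yb].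
  subst y; rewrite wb wo //.
  have := nb x ltac:(lia) ltac:(lia); have := uneq x a xa; rewrite /between; lia.
by rewrite !wo.
Qed.

Lemma leS0_cond u w : leS0 u w -> Cond u w.
Proof.
elim=> [u1 w1 e|u1 v1 w1 _ IH hc]; first exact: Cond_refl.
exact: Cond_trans IH (cover_cond hc).
Qed.

Definition negs (f : int -> int) (s : seq int) : nat :=
  (\sum_(i <- s) (if (f i < 0)%R then absz (f i) else 0%N))%N.
Definition negc (f : int -> int) (s : seq int) : nat := count (fun i => f i < 0) s.

Lemma lenB_on (u : sperm) N : (sbound u <= N)%N ->
  lenB u = (inv_on u (posr N) + negs u (posr N))%N.
Proof.
move=> hN; have hf : fixo u (sbound u) by apply: sperm_fixo.
set M := sbound u.
have ht : forall x, (x \in posr M) = (x \in posr N) && (absz x <= M)%N.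
  move=> x; rewrite !mem_posr; apply/idP/idP; [move=> /andP[]|move=>/andP[/andP[]]]; lia.
rewrite /lenB -/M (count_pairs (fun x y => (x < y) && (u y < u x))) big_mkcond /=.
congr addn.
  rewrite /inv_on.
  rewrite [RHS](sum_restr (P := fun x => (absz x <= M)%N) (uniq_posr N) (uniq_posr M) ht); last first.
    move=> x _ hx; apply: big1_seq => y _; apply: (J0l y hf); lia.
  apply: eq_bigr => x _.
  rewrite [RHS](sum_restr (P := fun x => (absz x <= M)%N) (uniq_posr N) (uniq_posr M) ht) //.
  move=> y _ hy; apply: (J0r x hf); lia.
rewrite /negs [RHS](sum_restr (P := fun x => (absz x <= M)%N) (uniq_posr N) (uniq_posr M) ht).
  by rewrite big_mkcond.
move=> x; rewrite mem_posr => /andP [h1 h2] h3; rewrite (hf x); last lia.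
by rewrite ltNge (ltW h1).
Qed.

Lemma B_inj (u : sperm) i j : isB u -> 0 < i -> 0 < j -> absz (u i) = absz (u j) -> i = j.
Proof.
move=> hB hi hj e.
have : (u i = u j) \/ (u i = u (- j)).
  rewrite hB; lia.
case=> /(@sfun_inj u); lia.
Qed.

Lemma u_ne0 (u : sperm) x : x != 0 -> u x != 0.
Proof.
move=> hx; apply/negP => /eqP e.
have : u x = u 0 by rewrite sfun0.
by move/(@sfun_inj u) => e2; rewrite e2 eqxx in hx.
Qed.

Lemma cnt_iota m N : (1 <= m <= N.+1)%N -> count (fun k => (k < m)%N) (iota 1 N) = m.-1.
Proof.
move=> hm.
have -> : N = (m.-1 + (N - m.-1))%N by lia.
rewrite iotaD count_cat.
have -> : count (fun k => (k < m)%N) (iota 1 m.-1) = m.-1.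
  rewrite -[RHS](size_iota 1 m.-1); apply/eqP; rewrite -all_count.
  by apply/allP => k; rewrite mem_iota; lia.
have -> : count (fun k => (k < m)%N) (iota (1 + m.-1) (N - m.-1)) = 0%N.
  apply/eqP; rewrite -leqn0 leqNgt -has_count; apply/hasPn => k; rewrite mem_iota; lia.
by rewrite addn0.
Qed.

Lemma countC (u : sperm) N m : isB u -> (sbound u <= N)%N -> (1 <= m <= N.+1)%N ->
  count (fun j => (absz (u j) < m)%N) (posr N) = m.-1.
Proof.
move=> hB hN hm.
have hf : fixo u N by apply: sperm_fixo.
have P : perm_eq (map (fun j => absz (u j)) (posr N)) (iota 1 N).
  have un : uniq (map (fun j => absz (u j)) (posr N)).
    rewrite map_inj_in_uniq ?uniq_posr // => i j; rewrite !mem_posr => /andP[hi _] /andP [hj _].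
    exact: B_inj.
  have sub : {subset map (fun j => absz (u j)) (posr N) <= iota 1 N}.
    move=> k /mapP [j]; rewrite mem_posr => /andP [hj1 hj2] ->.
    have := fixo_range hf hj2; have := u_ne0 u (lt0r_neq0 hj1) ; rewrite mem_iota; lia.
  have sz : (size (iota 1 N) <= size (map (fun j => absz (u j)) (posr N)))%N.
    by rewrite size_map size_iota /posr size_map size_iota.
  have [_ e] := uniq_min_size un sub sz.
  by apply: uniq_perm; rewrite ?iota_uniq.
rewrite -(count_map (fun j => absz (u j)) (fun k => (k < m)%N)) (permP P).
exact: cnt_iota.
Qed.

Lemma inv_on_cat f X Y :
  inv_on f (X ++ Y) =
  ((\sum_(x <- X) \sum_(y <- X) J f x y) + (\sum_(x <- X) \sum_(y <- Y) J f x y) +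
   (\sum_(x <- Y) \sum_(y <- X) J f x y) + (\sum_(x <- Y) \sum_(y <- Y) J f x y))%N.
Proof.
rewrite /inv_on big_cat /=.
under eq_bigr => x _ do rewrite big_cat.
under [X in (_ + X)%N]eq_bigr => x _ do rewrite big_cat.
rewrite !big_split /=; lia.
Qed.

Lemma perm_rng N : perm_eq (rng N) (map (fun i => - i) (posr N) ++ posr N).
Proof.
apply: uniq_perm; first exact: uniq_rng.
  rewrite cat_uniq uniq_posr andbT map_inj_uniq ?uniq_posr; last by move=> x y; lia.
  rewrite andTb; apply/hasPn => x; rewrite mem_posr => /andP [h1 _].
  by apply/mapP => [[y]]; rewrite mem_posr; lia.
move=> x; rewrite mem_cat mem_rng mem_posr; apply/idP/idP.
  move=> /andP [h1 h2]; case: (ltP 0 x) => hx; first by apply/orP; right; lia.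
  apply/orP; left; apply/mapP; exists (- x); last by lia.
  by rewrite mem_posr; lia.
case/orP; last by lia.
by case/mapP => y; rewrite mem_posr => h ->; lia.
Qed.

Lemma pt2 (u : sperm) i j : isB u -> 0 < i -> 0 < j ->
  nat_of_bool (u i + u j < 0)%R =
  (((i == j) && (u i < 0)%R) + ((u i < 0)%R && (absz (u j) < absz (u i))%N)
    + ((u j < 0)%R && (absz (u i) < absz (u j))%N))%N.
Proof.
move=> hB hi hj.
have ui0 : u i != 0 by apply: u_ne0; lia.
case: (eqVneq i j) => [<-|nij] /=; first by lia.
have : absz (u i) != absz (u j) by apply/negP => /eqP /(B_inj hB hi hj) /eqP; apply/negP.
lia.
Qed.

Lemma sum_neg (r : seq int) (F : int -> nat) :
  (\sum_(i <- map (fun i => -i) r) F i = \sum_(i <- r) F (- i))%N.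
Proof. by rewrite big_map. Qed.

Lemma L2 (u : sperm) N : isB u -> (sbound u <= N)%N ->
  (inv_on u (rng N) + negc u (posr N) = 2 * (inv_on u (posr N) + negs u (posr N)))%N.
Proof.
move=> hB hN.
have hf : fixo u N by apply: sperm_fixo.
set P := posr N.
have pP : forall i, i \in P -> 0 < i by move=> i; rewrite mem_posr => /andP[].
rewrite (inv_on_perm _ (perm_rng N)) inv_on_cat -/P.
under eq_bigr => x _ do rewrite sum_neg.
rewrite !sum_neg.
under [X in (_ + _ + X + _ + _)%N]eq_bigr => x _ do rewrite sum_neg.
have -> : (\sum_(i <- P) \sum_(j <- P) J u (- i)%R (- j)%R = inv_on u P)%N.
  rewrite /inv_on exchange_big; apply: eq_bigr => i _; apply: eq_bigr => j _.
  by rewrite /J !hB; congr (nat_of_bool _); apply/idP/idP; lia.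
have -> : (\sum_(i <- P) \sum_(j <- P) J u i (- j)%R = 0)%N.
  apply: big1_seq => i /andP [_ hi]; apply: big1_seq => j /andP [_ hj].
  by rewrite /J; have := pP _ hi; have := pP _ hj; case: (i < - j) / idP => //; lia.
have -> : (\sum_(i <- P) \sum_(j <- P) J u (- i)%R j =
           \sum_(i <- P) \sum_(j <- P) nat_of_bool (u i + u j < 0)%R)%N.
  apply: eq_big_seq => i hi; apply: eq_big_seq => j hj.
  rewrite /J hB; have := pP _ hi; have := pP _ hj; move=> h1 h2.
  congr (nat_of_bool _); apply/idP/idP; lia.
have -> : (\sum_(i <- P) \sum_(j <- P) nat_of_bool (u i + u j < 0)%R =
   \sum_(i <- P) ((u i < 0)%R : nat) + \sum_(i <- P) (if (u i < 0)%R then (absz (u i)).-1 else 0%N)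
   + \sum_(i <- P) (if (u i < 0)%R then (absz (u i)).-1 else 0%N))%N.
  have cnt : forall i, i \in P ->
     (\sum_(j <- P) ((u i < 0)%R && (absz (u j) < absz (u i))%N) =
      if (u i < 0)%R then (absz (u i)).-1 else 0%N)%N.
    move=> i hi; case: (u i < 0)%R => /=; last by rewrite big1.
    rewrite -count_sum countC //.
    have := pP _ hi => h; have := u_ne0 u (lt0r_neq0 h); have := fixo_range hf.
    rewrite mem_posr in hi; move=> r; have := r i ltac:(lia); lia.
  have d : forall i, i \in P -> (\sum_(j <- P) ((i == j) && (u i < 0)%R) = (u i < 0)%R)%N.
    move=> i hi; rewrite (bigD1_seq i) ?uniq_posr //= eqxx /= big1 ?addn0 //.
    by move=> j; rewrite eq_sym => /negbTE ->.
  transitivity (\sum_(i <- P) \sum_(j <- P)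
     (((i == j) && (u i < 0)%R) + ((u i < 0)%R && (absz (u j) < absz (u i))%N)
    + ((u j < 0)%R && (absz (u i) < absz (u j))%N)))%N.
    apply: eq_big_seq => i hi; apply: eq_big_seq => j hj; apply: pt2 => //; exact: pP.
  rewrite [X in (X = _)%N](eq_bigr (fun i => \sum_(j <- P) ((i == j) && (u i < 0)%R) +
           \sum_(j <- P) ((u i < 0)%R && (absz (u j) < absz (u i))%N) +
           \sum_(j <- P) ((u j < 0)%R && (absz (u i) < absz (u j))%N)))%N; last first.
    by move=> i _; rewrite !big_split.
  rewrite !big_split /=.
  rewrite [X in (_ + X = _)%N]exchange_big /=.
  congr (_ + _ + _)%N; apply: eq_big_seq => i hi; [exact: d|exact: cnt|exact: cnt].
rewrite /negc /negs count_sum.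
have -> : (\sum_(i <- P) (if (u i < 0)%R then absz (u i) else 0%N) =
           \sum_(i <- P) ((u i < 0)%R : nat) + \sum_(i <- P) (if (u i < 0)%R then (absz (u i)).-1 else 0%N))%N.
  rewrite -big_split; apply: eq_big_seq => i hi /=.
  have := u_ne0 u (lt0r_neq0 (pP _ hi)); case: (u i < 0)%R => /=; lia.
rewrite /inv_on; lia.
Qed.

Lemma LSB (u : sperm) N : isB u -> (sbound u <= N)%N ->
  (lenS u + negc u (posr N) = 2 * lenB u)%N.
Proof.
move=> hB hN; rewrite (lenS_on hN) (lenB_on hN); exact: L2.
Qed.

Lemma negc1 (u w : int -> int) P p : uniq P -> p \in P ->
  (forall x, x \in P -> x != p -> w x = u x) ->
  (negc w P + (u p < 0)%R = negc u P + (w p < 0)%R)%N.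
Proof.
move=> uP hp hw; rewrite /negc !count_sum (bigD1_seq _ hp uP) (bigD1_seq _ hp uP) /=.
have -> : (\sum_(i <- P | i != p) ((w i < 0)%R : nat) = \sum_(i <- P | i != p) ((u i < 0)%R : nat))%N.
  by rewrite big_seq_cond [RHS]big_seq_cond; apply: eq_bigr => x /andP [hx hxp]; rewrite hw.
set S := (\sum_(i <- P | _) _)%N.
by rewrite addnAC [RHS]addnAC [X in (X + _)%N]addnC.
Qed.

Lemma negc2 (u w : int -> int) P p q : uniq P -> p \in P -> q \in P -> p != q ->
  (forall x, x \in P -> x != p -> x != q -> w x = u x) ->
  (negc w P + (u p < 0)%R + (u q < 0)%R = negc u P + (w p < 0)%R + (w q < 0)%R)%N.
Proof.
move=> uP hp hq pq hw.
set m := fun x => if x == p then w p else u x.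
have hm : forall x, x \in P -> x != p -> m x = u x by move=> x _ hx; rewrite /m (negbTE hx).
have h1 := negc1 uP hp hm.
have h2 : (negc w P + (m q < 0)%R = negc m P + (w q < 0)%R)%N.
  apply: negc1 => // x hx hxq; rewrite /m; case: (eqVneq x p) => [->//|hxp].
  by rewrite hw.
move: h1 h2; rewrite /m eqxx eq_sym (negbTE pq); lia.
Qed.

Lemma lenS_ext (u w : sperm) : u =1 w -> lenS u = lenS w.
Proof.
move=> e.
rewrite (lenS_on (u := u) (N := maxn (sbound u) (sbound w))) ?leq_maxl //.
rewrite (lenS_on (u := w) (N := maxn (sbound u) (sbound w))) ?leq_maxr //.
by rewrite /inv_on; apply: eq_bigr => x _; apply: eq_bigr => y _; rewrite /J !e.
Qed.

Lemma leS0_ext_r (u v w : sperm) : leS0 u v -> v =1 w -> leS0 u w.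
Proof.
move=> h; elim: h w => [u1 w1 e|u1 v1 w1 _ IH [hl [a [b [hab hw]]]]] w2 e2.
  by apply: leS0_refl => x; rewrite e e2.
apply: (leS0_step (v := v1)); first exact: IH.
split; first by rewrite -(lenS_ext e2).
by exists a, b; split => // x; rewrite -e2 hw.
Qed.

Lemma leS0_trans u v w : leS0 u v -> leS0 v w -> leS0 u w.
Proof.
move=> h1 h2; elim: h2 u h1 => [v1 w1 e|v1 v2 w1 _ IH hc] u h1.
  exact: leS0_ext_r h1 e.
exact: leS0_step (IH _ h1) hc.
Qed.

Lemma coverS_mk (u w : sperm) a b : a < 0 < b -> (forall x, w x = u (transp a b x)) ->
  lenS w = (lenS u).+1 -> leS0 u w.
Proof.
move=> hab hw hl; apply: (leS0_step (v := u)); first exact: leS0_refl.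
by split => //; exists a, b.
Qed.

Lemma uneqP (u : sperm) x y : x != y -> u x != u y.
Proof. by move=> nxy; apply/negP => /eqP /(@sfun_inj u) /eqP; apply/negP. Qed.

Lemma coverB_leS (u w : sperm) : coverB u w -> leS0 u w.
Proof.
case=> hBu hBw hl [[j [hj hw]]|[i [j [/andP [hi hij] hw]]]].
- set N := maxn (maxn (sbound u) (sbound w)) (absz j).
  have hu := LSB (N := N) hBu ltac:(lia).
  have hw' := LSB (N := N) hBw ltac:(lia).
  have jP : j \in posr N by rewrite mem_posr hj /N; lia.
  have hh : forall x, x \in posr N -> x != j -> w x = u x.
    by move=> x hx hxj; rewrite hw transp_o //; move: hx; rewrite mem_posr; lia.
  have nc := negc1 (uniq_posr N) jP hh.
  have wj : w j = - u j by rewrite hw transp_b hBu.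
  rewrite wj in nc.
  have j0 : - j != 0 by lia.
  have j0' : j != 0 by lia.
  have hab : - j < j by lia.
  have uj0 := u_ne0 u j0'.
  have e := hBu j.
  case: (ltgtP (u (- j)) (u j)) => c.
  + have e1 := LS_pos hab j0 j0' hw c; rewrite e in c.
    apply: (coverS_mk (a := - j) (b := j)); [lia|exact: hw|].
    move: hu hw' nc e1 hl c; lia.
  + have e1 := LS_neg hab j0 j0' hw c; rewrite e in c.
    move: hu hw' nc e1 hl c; lia.
  + rewrite e in c; lia.
- have i0 : i != 0 by lia.
  have j0 : j != 0 by lia.
  have mj0 : - j != 0 by lia.
  have mi0 : - i != 0 by lia.
  have [v [hv _]] := exS u mj0 i0.
  have hwv : forall x, w x = v (transp (- i) j x) by move=> x; rewrite hw hv.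
  set N := maxn (maxn (sbound u) (sbound w)) (absz j).
  have hu := LSB (N := N) hBu ltac:(lia).
  have hw' := LSB (N := N) hBw ltac:(lia).
  have iP : i \in posr N by rewrite mem_posr /N; lia.
  have jP : j \in posr N by rewrite mem_posr /N; lia.
  have hh : forall x, x \in posr N -> x != i -> x != j -> w x = u x.
    by move=> x hx h1 h2; rewrite hw !transp_o //; move: hx; rewrite mem_posr; lia.
  have ij : i != j by lia.
  have nc := negc2 (uniq_posr N) iP jP ij hh.
  have ej := hBu j.
  have ei := hBu i.
  have wi : w i = - u j.
    by rewrite hw (transp_o (a := - i)); [rewrite transp_b ej|lia|lia].
  have wj : w j = - u i by rewrite hw transp_b transp_o; [rewrite ei|lia|lia].
  rewrite wi wj in nc.
  have vmi : v (- i) = - u i by rewrite hv transp_o; [rewrite ei|lia|lia].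
  have vj : v j = u j by rewrite hv transp_o; lia.
  have ui0 := u_ne0 u i0.
  have uj0 := u_ne0 u j0.
  have h1 : - j < i by lia.
  have h2 : - i < j by lia.
  have ne := @uneqP u (-j) i ltac:(lia).
  case: (ltgtP (u (- j)) (u i)) => c.
  + have e1 := LS_pos h1 mj0 i0 hv c.
    have c2 : v (- i) < v j by rewrite vmi vj; move: c; rewrite ej; lia.
    have e2 := LS_pos h2 mi0 j0 hwv c2.
    rewrite ej in c.
    have e3 : lenS v = (lenS u).+1 by move: hu hw' nc e1 e2 hl c; lia.
    apply: leS0_trans (coverS_mk (a := - j) (b := i) _ hv e3) _; first by lia.
    apply: (coverS_mk (a := - i) (b := j)); [lia|exact: hwv|].
    move: hu hw' nc e1 e2 hl c; lia.
  + have e1 := LS_neg h1 mj0 i0 hv c.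
    have c2 : v j < v (- i) by rewrite vmi vj; move: c; rewrite ej; lia.
    have e2 := LS_neg h2 mi0 j0 hwv c2.
    rewrite ej in c.
    move: hu hw' nc e1 e2 hl c; lia.
  + by rewrite c eqxx in ne.
Qed.

Lemma leB_leS u w : leB0 u w -> leS0 u w.
Proof.
elim=> [u1 w1 e|u1 v1 w1 _ IH hc]; first exact: leS0_refl.
exact: leS0_trans IH (coverB_leS hc).
Qed.

Lemma count0 (P : pred int) N : (forall c, c != 0 -> ~~ P c) -> count P (rng N) = 0%N.
Proof.
move=> h; apply/eqP; rewrite -leqn0 leqNgt -has_count; apply/hasPn => c.
rewrite mem_rng => /andP [hc _]; exact: h.
Qed.

Lemma isB_comp (u v : sperm) (t : int -> int) : isB u -> (forall y, t (- y) = - t y) ->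
  (forall x, v x = u (t x)) -> isB v.
Proof. by move=> hB ht hv y; rewrite !hv ht hB. Qed.

Lemma transp_odd b y : transp (- b) b (- y) = - transp (- b) b y.
Proof. rewrite /transp; repeat case: eqP; lia. Qed.

Lemma Alpha_len (u : sperm) b : isB u -> 0 < b -> u (- b) < u b ->
  (forall c, c != 0 -> ~~ between u (- b) b c) ->
  exists u' : sperm, (forall x, u' x = u (transp (- b) b x)) /\ isB u' /\
    lenB u' = (lenB u).+1.
Proof.
move=> hB hb c hg.
have b0 : b != 0 by lia.
have mb0 : - b != 0 by lia.
have [v [hv _]] := exS u mb0 b0.
have hBv : isB v := isB_comp hB (@transp_odd b) hv.
exists v; split => //; split => //.
set M := maxn (sbound u) (maxn (sbound v) (absz b)).
have hu := LSB (N := M) hB ltac:(lia).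
have hv' := LSB (N := M) hBv ltac:(lia).
have bP : b \in posr M by rewrite mem_posr /M; lia.
have hh : forall x, x \in posr M -> x != b -> v x = u x.
  by move=> x hx hxb; rewrite hv transp_o //; move: hx; rewrite mem_posr; lia.
have nc := negc1 (uniq_posr M) bP hh.
have e1 := LS_pos (w := v) (a := - b) (b := b) ltac:(lia) mb0 b0 hv c.
rewrite count0 // in e1.
rewrite hv transp_b in nc.
rewrite hB in c.
move: hu hv' nc e1 c; lia.
Qed.

Lemma Beta_len (u : sperm) i j : isB u -> 0 < i -> i < j -> u (- j) < u i ->
  (forall c, c != 0 -> ~~ between u (- j) i c) ->
  (forall c, c != 0 -> ~~ between (fun x => u (transp (- j) i x)) (- i) j c) ->
  (u i < 0) = (- u j < 0) -> (u j < 0) = (- u i < 0) ->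
  exists u' : sperm, (forall x, u' x = u (transp (- j) i (transp (- i) j x))) /\ isB u' /\
    lenB u' = (lenB u).+1.
Proof.
move=> hB hi hij c g1 g2 s1 s2.
have i0 : i != 0 by lia.
have j0 : j != 0 by lia.
have mj0 : - j != 0 by lia.
have mi0 : - i != 0 by lia.
have [v [hv _]] := exS u mj0 i0.
have [w [hw _]] := exS v mi0 j0.
have hwu : forall x, w x = u (transp (- j) i (transp (- i) j x)) by move=> x; rewrite hw hv.
have ej := hB j.
have ei := hB i.
have odd : forall y, transp (- j) i (transp (- i) j (- y)) = - transp (- j) i (transp (- i) j y).
  move=> y; rewrite /transp; repeat case: eqP; lia.
have hBw : isB w := isB_comp hB odd hwu.
exists w; split => //; split => //.
set M := maxn (sbound u) (maxn (sbound w) (absz j)).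
have hu := LSB (N := M) hB ltac:(lia).
have hw' := LSB (N := M) hBw ltac:(lia).
have iP : i \in posr M by rewrite mem_posr /M; lia.
have jP : j \in posr M by rewrite mem_posr /M; lia.
have hh : forall x, x \in posr M -> x != i -> x != j -> w x = u x.
  by move=> x hx h1 h2; rewrite hwu !transp_o //; move: hx; rewrite mem_posr; lia.
have ij : i != j by lia.
have nc := negc2 (uniq_posr M) iP jP ij hh.
have wi : w i = - u j.
  by rewrite hwu (transp_o (a := - i)); [rewrite transp_b ej|lia|lia].
have wj : w j = - u i by rewrite hwu transp_b transp_o; [rewrite ei|lia|lia].
rewrite wi wj -s1 -s2 in nc.
have e1 := LS_pos (w := v) (a := - j) (b := i) ltac:(lia) mj0 i0 hv c.
rewrite count0 // in e1.
have vmi : v (- i) = - u i by rewrite hv transp_o; [rewrite ei|lia|lia].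
have vj : v j = u j by rewrite hv transp_o; lia.
have c2 : v (- i) < v j by rewrite vmi vj; move: c; rewrite ej; lia.
have e2 := LS_pos (a := - i) (b := j) ltac:(lia) mi0 j0 hw c2.
rewrite count0 in e2; last first.
  by move=> c' hc'; have := g2 c' hc'; rewrite /between !hv.
move: hu hw' nc e1 e2; lia.
Qed.

Definition CondB (u w : int -> int) :=
  (forall c, 0 < c -> w c <= u c) /\
  (forall c d, 0 < c -> c < d -> u c < u d -> w c < w d).

Definition meas (u w : int -> int) N := (\sum_(c <- posr N) absz (u c - w c))%N.

Lemma sum1 (F G : int -> nat) P p : uniq P -> p \in P ->
  (forall x, x \in P -> x != p -> F x = G x) ->
  (\sum_(x <- P) F x + G p = \sum_(x <- P) G x + F p)%N.
Proof.
move=> uP hp hw; rewrite (bigD1_seq _ hp uP) (bigD1_seq _ hp uP) /=.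
have -> : (\sum_(i <- P | i != p) F i = \sum_(i <- P | i != p) G i)%N.
  by rewrite big_seq_cond [RHS]big_seq_cond; apply: eq_bigr => x /andP [hx hxp]; rewrite hw.
set S := (\sum_(i <- P | _) _)%N.
by rewrite addnAC [RHS]addnAC [X in (X + _)%N]addnC.
Qed.

Lemma sum2 (F G : int -> nat) P p q : uniq P -> p \in P -> q \in P -> p != q ->
  (forall x, x \in P -> x != p -> x != q -> F x = G x) ->
  (\sum_(x <- P) F x + G p + G q = \sum_(x <- P) G x + F p + F q)%N.
Proof.
move=> uP hp hq pq hw.
set m := fun x => if x == p then F p else G x.
have hm : forall x, x \in P -> x != p -> m x = G x by move=> x _ hx; rewrite /m (negbTE hx).
have h1 := sum1 uP hp hm.
have h2 : (\sum_(x <- P) F x + m q = \sum_(x <- P) m x + F q)%N.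
  apply: sum1 => // x hx hxq; rewrite /m; case: (eqVneq x p) => [->//|hxp].
  by rewrite hw.
move: h1 h2; rewrite /m eqxx eq_sym (negbTE pq).
set A := (\sum_(x <- P) F x)%N; set B := (\sum_(x <- P) G x)%N.
set C := (\sum_(x <- P) _)%N.
lia.
Qed.

Lemma pos_of (u : sperm) y : isB u -> y != 0 -> exists d, 0 < d /\ absz (u d) = absz y.
Proof.
move=> hB y0; have [d0 e] := sperm_surj u y.
have d00 : d0 != 0 by apply/negP => /eqP h; move: e; rewrite h sfun0 => h2; move: y0; rewrite -h2 eqxx.
case: (ltP 0 d0) => h; first by exists d0; rewrite e.
exists (- d0); split; first lia.
by rewrite hB e; lia.
Qed.

Lemma seq_min (s : seq int) (f : int -> int) : s != [::] ->
  exists2 b, b \in s & forall c, c \in s -> f b <= f c.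
Proof.
elim: s => [//|x s IH] _.
case: (eqVneq s [::]) => [->|ns].
  by exists x; rewrite ?inE ?eqxx // => c; rewrite inE => /eqP ->.
have [b hb hmin] := IH ns.
case: (leP (f x) (f b)) => h.
  exists x; first by rewrite inE eqxx.
  move=> c; rewrite inE => /orP [/eqP -> //|hc]; exact: le_trans h (hmin _ hc).
exists b; first by rewrite inE hb orbT.
move=> c; rewrite inE => /orP [/eqP ->|hc]; [lia|exact: hmin].
Qed.

Lemma mover_le (u w : sperm) N c : fixo u N -> fixo w N -> w c < u c -> (absz c <= N)%N.
Proof.
move=> hu hw h; rewrite leqNgt; apply/negP => hc.
by move: h; rewrite (hu _ hc) (hw _ hc) ltxx.
Qed.

Lemma fixo_comp (u v : sperm) N (t : int -> int) : fixo u N ->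
  (forall x, (N < absz x)%N -> t x = x) -> (forall x, v x = u (t x)) -> fixo v N.
Proof. by move=> hu ht hv x hx; rewrite hv ht // hu. Qed.

Lemma alpha_step (u w : sperm) N b : isB u -> isB w -> fixo u N -> fixo w N ->
  CondB u w -> 0 < b -> w b < u b -> 0 < u b ->
  (forall c, 0 < c -> w c < u c -> u b <= u c) ->
  exists u' : sperm, [/\ coverB u u', isB u', fixo u' N, CondB u' w &
                         (meas u' w N < meas u w N)%N].
Proof.
move=> hBu hBw hfu hfw [P1 P2] hb wb ub hmin.
have F0 : forall d, 0 < d -> u d < u b -> w d = u d.
  move=> d hd h; have := P1 d hd; rewrite le_eqVlt => /orP [/eqP //|h2].
  have := hmin d hd h2; lia.
have F1 : w b <= - u b.
  rewrite leNgt; apply/negP => h.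
  have wb0 : w b != 0 by apply: u_ne0; lia.
  have [d [hd e]] := pos_of hBu wb0.
  have e2 : w d = u d by apply: F0 => //; lia.
  have : d = b by apply: (B_inj hBw) => //; lia.
  move=> edb; move: e2 e; rewrite edb; lia.
have gap : forall c, c != 0 -> ~~ between u (- b) b c.
  move=> c c0; apply/negP; rewrite /between hBu => /andP [/andP[h1 h2] /andP[h3 h4]].
  case: (ltP 0 c) => hc.
    have e := F0 c hc ltac:(lia); have := P2 c b hc h2 h4; lia.
  have hc' : 0 < - c by lia.
  have e1 := hBu c.
  have e := F0 (- c) hc' ltac:(lia); have := P2 (- c) b hc' ltac:(lia) ltac:(lia); lia.
have [u' [hu' [hB' hl]]] := Alpha_len hBu hb ltac:(rewrite hBu; lia) gap.
have bN : (absz b <= N)%N := mover_le hfu hfw wb.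
exists u'; split.
- by split => //; left; exists b.
- exact: hB'.
- apply: (fixo_comp hfu _ hu') => x hx; rewrite transp_o //; lia.
- have u'b : u' b = - u b by rewrite hu' transp_b hBu.
  have u'o : forall c, 0 < c -> c != b -> u' c = u c.
    by move=> c hc hcb; rewrite hu' transp_o //; lia.
  split.
    move=> c hc; case: (eqVneq c b) => [->|hcb]; first by rewrite u'b.
    by rewrite u'o //; apply: P1.
  move=> c d hc hcd.
  case: (eqVneq c b) => [ecb|hcb].
    subst c; rewrite u'b u'o; [|lia|lia] => h.
    case: (ltgtP (u b) (u d)) => h2.
    + exact: P2.
    + have := F0 d ltac:(lia) h2; lia.
    + by have := (@sfun_inj u) _ _ h2; lia.
  case: (eqVneq d b) => [edb|hdb].
    subst d; rewrite u'b u'o // => h; apply: P2 => //; lia.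
  by rewrite !u'o //; [apply: P2|lia].
- have bP : b \in posr N by rewrite mem_posr; lia.
  have := sum1 (F := fun c => absz (u' c - w c)) (G := fun c => absz (u c - w c))
    (uniq_posr N) bP.
  have hh : forall x, x \in posr N -> x != b -> absz (u' x - w x) = absz (u x - w x).
    by move=> x hx hxb; rewrite hu' transp_o //; move: hx; rewrite mem_posr; lia.
  rewrite /meas => h; have := h hh.
  rewrite hu' transp_b hBu.
  set S1 := (\sum_(x <- posr N) absz (u' x - w x))%N.
  set S2 := (\sum_(x <- posr N) absz (u x - w x))%N.
  lia.
Qed.

Lemma beta_step (u w : sperm) N b : isB u -> isB w -> fixo u N -> fixo w N ->
  CondB u w -> 0 < b -> w b < u b -> u b < 0 ->
  (forall c, 0 < c -> w c < u c -> u b <= u c) ->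
  exists u' : sperm, [/\ coverB u u', isB u', fixo u' N, CondB u' w &
                         (meas u' w N < meas u w N)%N].
Proof.
move=> hBu hBw hfu hfw [P1 P2] hb wb ub hmin.
have F0 : forall d, 0 < d -> u d < u b -> w d = u d.
  move=> d hd h; have := P1 d hd; rewrite le_eqVlt => /orP [/eqP //|h2].
  have := hmin d hd h2; lia.
have wb0 : w b != 0 by lia.
have hE : has (fun e => (- u b < u e) && (w e < u e)) (posr N).
  apply/negPn/negP => hn.
  have [d [hd ed]] := pos_of hBu wb0.
  case: (ltP 0 (u d)) => hud.
    have P1d := P1 d hd.
    case: (ltgtP (w d) (u d)) => h2.
    - move/hasPn: hn => /(_ d); rewrite mem_posr hd /= (mover_le hfu hfw h2) => /(_ isT).
      by rewrite h2 andbT; lia.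
    - lia.
    - have : d = b by apply: (B_inj hBw) => //; lia.
      move=> edb; move: hud; rewrite edb; lia.
  have e2 := F0 d hd ltac:(lia).
  have : d = b by apply: (@sfun_inj w); lia.
  move=> edb; move: e2 ed; rewrite edb; lia.
move: hE; rewrite has_filter => ne.
have [e he hmin0] := seq_min u ne.
move: he; rewrite mem_filter mem_posr => /andP [/andP [ae we] /andP [he heN]].
have hmin' : forall d, 0 < d -> - u b < u d -> w d < u d -> u e <= u d.
  move=> d hd h1 h2; apply: hmin0; rewrite mem_filter mem_posr h1 h2 hd /=.
  exact: (mover_le hfu hfw h2).
have F0' : forall d, 0 < d -> - u b < u d -> u d < u e -> w d = u d.
  move=> d hd h h'; have := P1 d hd; rewrite le_eqVlt => /orP [/eqP //|h2].
  have := hmin' d hd h h2; lia.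
have H : w e <= - u b.
  rewrite leNgt; apply/negP => h.
  have we0 : w e != 0 by lia.
  have [d [hd ed]] := pos_of hBu we0.
  case: (ltP 0 (u d)) => hud.
    have e2 := F0' d hd ltac:(lia) ltac:(lia).
    have : d = e by apply: (@sfun_inj w); lia.
    move=> ede; move: e2 we; rewrite ede; lia.
  have e2 := F0 d hd ltac:(lia).
  have : d = e by apply: (B_inj hBw) => //; lia.
  move=> ede; move: hud ae; rewrite ede; lia.
have Wb : w b <= - u e.
  rewrite leNgt; apply/negP => h.
  have [d [hd ed]] := pos_of hBu wb0.
  case: (ltP 0 (u d)) => hud.
    have e2 := F0' d hd ltac:(lia) ltac:(lia).
    have : d = b by apply: (B_inj hBw) => //; lia.
    move=> edb; move: hud; rewrite edb; lia.
  have e2 := F0 d hd ltac:(lia).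
  have : d = b by apply: (@sfun_inj w); lia.
  move=> edb; move: e2 ed; rewrite edb; lia.
have G1 : forall c, 0 < c -> c < e -> ~~ ((- u b < u c) && (u c < u e)).
  move=> c hc hce; apply/negP => /andP [h1 h2].
  have e2 := F0' c hc h1 h2; have := P2 c e hc hce h2; lia.
have G2 : forall c, 0 < c -> c < b -> ~~ ((- u e < u c) && (u c < u b)).
  move=> c hc hcb; apply/negP => /andP [h1 h2].
  have e2 := F0 c hc h2; have := P2 c b hc hcb h2; lia.
have bN : (absz b <= N)%N := mover_le hfu hfw wb.
have eN : (absz e <= N)%N := mover_le hfu hfw we.
have hBb := hBu b.
have hBe := hBu e.
have claim : exists u' : sperm, [/\ coverB u u', isB u', u' b = - u e, u' e = - u b &
    forall c, c != b -> c != - b -> c != e -> c != - e -> u' c = u c].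
  case: (ltgtP b e) => hbe.
  - have g1 : forall c, c != 0 -> ~~ between u (- e) b c.
      move=> c c0; rewrite /between hBe; apply/negP => /andP [/andP [h1 h2] /andP [h3 h4]].
      case: (ltP 0 c) => hc; first by move/negP: (G2 c hc h2); apply; lia.
      have := hBu c => e1.
      by move/negP: (G1 (- c) ltac:(lia) ltac:(lia)); apply; lia.
    have g2 : forall c, c != 0 -> ~~ between (fun x => u (transp (- e) b x)) (- b) e c.
      move=> c c0; rewrite /between /=.
      rewrite (transp_o (x := - b)); [|lia|lia].
      rewrite (transp_o (x := e)); [|lia|lia].
      rewrite hBb; apply/negP => /andP [/andP [h1 h2] /andP [h3 h4]].
      case: (eqVneq c b) => [ecb|hcb].
        by move: h3; rewrite ecb transp_b hBe; lia.
      move: h3 h4; rewrite transp_o; [|lia|exact: hcb] => h3 h4.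
      case: (ltP 0 c) => hc; first by move/negP: (G1 c hc h2); apply; lia.
      have := hBu c => e1.
      by move/negP: (G2 (- c) ltac:(lia) ltac:(lia)); apply; lia.
    have [u' [hu' [hB' hl]]] := Beta_len hBu hb hbe ltac:(rewrite hBe; lia) g1 g2
      ltac:(apply/idP/idP; lia) ltac:(apply/idP/idP; lia).
    exists u'; split => //.
    + by split => //; right; exists b, e; split => //; lia.
    + rewrite hu' (transp_o (x := b)); [|lia|lia].
      by rewrite transp_b hBe.
    + rewrite hu' transp_b (transp_o (x := - b)); [|lia|lia].
      by rewrite hBb.
    + by move=> c h1 h2 h3 h4; rewrite hu' !transp_o.
  - have g1 : forall c, c != 0 -> ~~ between u (- b) e c.
      move=> c c0; rewrite /between hBb; apply/negP => /andP [/andP [h1 h2] /andP [h3 h4]].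
      case: (ltP 0 c) => hc; first by move/negP: (G1 c hc h2); apply; lia.
      have := hBu c => e1.
      by move/negP: (G2 (- c) ltac:(lia) ltac:(lia)); apply; lia.
    have g2 : forall c, c != 0 -> ~~ between (fun x => u (transp (- b) e x)) (- e) b c.
      move=> c c0; rewrite /between /=.
      rewrite (transp_o (x := - e)); [|lia|lia].
      rewrite (transp_o (x := b)); [|lia|lia].
      rewrite hBe; apply/negP => /andP [/andP [h1 h2] /andP [h3 h4]].
      case: (eqVneq c e) => [ece|hce].
        by move: h4; rewrite ece transp_b hBb; lia.
      move: h3 h4; rewrite transp_o; [|lia|exact: hce] => h3 h4.
      case: (ltP 0 c) => hc; first by move/negP: (G2 c hc h2); apply; lia.
      have := hBu c => e1.
      by move/negP: (G1 (- c) ltac:(lia) ltac:(lia)); apply; lia.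
    have [u' [hu' [hB' hl]]] := Beta_len hBu he hbe ltac:(rewrite hBb; lia) g1 g2
      ltac:(apply/idP/idP; lia) ltac:(apply/idP/idP; lia).
    exists u'; split => //.
    + by split => //; right; exists e, b; split => //; lia.
    + rewrite hu' transp_b (transp_o (x := - e)); [|lia|lia].
      by rewrite hBe.
    + rewrite hu' (transp_o (x := e)); [|lia|lia].
      by rewrite transp_b hBb.
    + by move=> c h1 h2 h3 h4; rewrite hu' !transp_o.
  - by move: ub ae; rewrite hbe; lia.
have [u' [hcov hB' u'b u'e u'o]] := claim.
have u'p : forall c, 0 < c -> c != b -> c != e -> u' c = u c.
  by move=> c hc h1 h2; apply: u'o => //; lia.
have be : b != e by apply/negP => /eqP ebe; move: ub ae; rewrite ebe; lia.
exists u'; split => //.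
- by move=> x hx; rewrite u'o; [apply: hfu|lia|lia|lia|lia].
- split.
    move=> c hc; case: (eqVneq c b) => [->|hcb]; first by rewrite u'b.
    case: (eqVneq c e) => [->|hce]; first by rewrite u'e.
    by rewrite u'p //; apply: P1.
  move=> c d hc hcd.
  case: (eqVneq c b) => [ecb|hcb].
    subst c; case: (eqVneq d e) => [ede|hde].
      by subst d => _; apply: P2 => //; lia.
    rewrite u'b u'p; [|lia|lia|exact: hde] => h.
    case: (ltgtP (u b) (u d)) => h2.
    + exact: P2.
    + have := F0 d ltac:(lia) h2; lia.
    + by have := (@sfun_inj u) _ _ h2; lia.
  case: (eqVneq d b) => [edb|hdb].
    subst d; case: (eqVneq c e) => [ece|hce].
      by subst c; rewrite u'e u'b; lia.
    rewrite u'b u'p // => h; apply: P2 => //; lia.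
  case: (eqVneq c e) => [ece|hce].
    subst c; rewrite u'e u'p //; [|lia|lia] => h.
    case: (ltgtP (u e) (u d)) => h2.
    + exact: P2.
    + have := F0' d ltac:(lia) ltac:(lia) h2; lia.
    + by have := (@sfun_inj u) _ _ h2; lia.
  case: (eqVneq d e) => [ede|hde].
    subst d; rewrite u'e u'p // => h; apply: P2 => //; lia.
  by rewrite !u'p //; [apply: P2|lia].
- have bP : b \in posr N by rewrite mem_posr; lia.
  have eP : e \in posr N by rewrite mem_posr; lia.
  have hh : forall x, x \in posr N -> x != b -> x != e -> absz (u' x - w x) = absz (u x - w x).
    by move=> x hx h1 h2; rewrite u'p //; move: hx; rewrite mem_posr; lia.
  have := sum2 (F := fun c => absz (u' c - w c)) (G := fun c => absz (u c - w c))
    (uniq_posr N) bP eP be hh.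
  rewrite /meas u'b u'e.
  set S1 := (\sum_(x <- posr N) absz (u' x - w x))%N.
  set S2 := (\sum_(x <- posr N) absz (u x - w x))%N.
  lia.
Qed.

Lemma dichot (u w : sperm) N : isB u -> isB w -> fixo u N -> fixo w N -> CondB u w ->
  u =1 w \/ exists b, [/\ 0 < b, w b < u b & forall c, 0 < c -> w c < u c -> u b <= u c].
Proof.
move=> hBu hBw hfu hfw [P1 P2].
case: (boolP (has (fun c => w c < u c) (posr N))) => hh.
  right; move: hh; rewrite has_filter => ne.
  have [b hb hmin] := seq_min u ne.
  move: hb; rewrite mem_filter mem_posr => /andP [wb /andP [hb _]].
  exists b; split => // c hc wc; apply: hmin.
  by rewrite mem_filter mem_posr wc hc (mover_le hfu hfw wc).
left.
have pos : forall x, 0 < x -> u x = w x.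
  move=> x hx; case: (leqP (absz x) N) => hxN; last by rewrite hfu // hfw.
  move/hasPn: hh => /(_ x); rewrite mem_posr hx hxN => /(_ isT) h.
  have := P1 x hx; lia.
move=> x; case: (ltgtP 0 x) => hx; first exact: pos.
  by rewrite -(opprK x) hBu hBw pos //; lia.
by rewrite -hx !sfun0.
Qed.

Lemma lenB_ext (u w : sperm) : u =1 w -> lenB u = lenB w.
Proof.
move=> e.
rewrite (lenB_on (u := u) (N := maxn (sbound u) (sbound w))) ?leq_maxl //.
rewrite (lenB_on (u := w) (N := maxn (sbound u) (sbound w))) ?leq_maxr //.
congr addn.
  by rewrite /inv_on; apply: eq_bigr => x _; apply: eq_bigr => y _; rewrite /J !e.
by rewrite /negs; apply: eq_bigr => x _; rewrite e.
Qed.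

Lemma coverB_ext_r (u v w : sperm) : coverB u v -> v =1 w -> coverB u w.
Proof.
case=> hBu hBv hl hor e; split => //.
- by move=> x; rewrite -!e hBv.
- by rewrite -(lenB_ext e).
case: hor => [[j [hj hv]]|[i [j [hij hv]]]].
  by left; exists j; split => // x; rewrite -e hv.
by right; exists i, j; split => // x; rewrite -e hv.
Qed.

Lemma leB0_cons (u v w : sperm) : coverB u v -> leB0 v w -> leB0 u w.
Proof.
move=> hc h; elim: h u hc => [v1 w1 e|v1 v2 w1 _ IH hc2] u hc.
  apply: (leB0_step (v := u)); first exact: leB0_refl.
  exact: coverB_ext_r hc e.
exact: leB0_step (IH _ hc) hc2.
Qed.

Lemma dir2 (w : sperm) N : isB w -> fixo w N ->
  forall n (u : sperm), isB u -> fixo u N -> CondB u w -> (meas u w N <= n)%N -> leB0 u w.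
Proof.
move=> hBw hfw n; elim: n => [|n IH] u hBu hfu hC hm.
  case: (dichot hBu hBw hfu hfw hC) => [e|[b [hb wb hmin]]]; first exact: leB0_refl.
  have ub0 : u b != 0 by apply: u_ne0; lia.
  case: (ltgtP 0 (u b)) => hub.
  - have [u' [_ _ _ _ hm']] := alpha_step hBu hBw hfu hfw hC hb wb hub hmin; lia.
  - have [u' [_ _ _ _ hm']] := beta_step hBu hBw hfu hfw hC hb wb hub hmin; lia.
  - by rewrite -hub eqxx in ub0.
case: (dichot hBu hBw hfu hfw hC) => [e|[b [hb wb hmin]]]; first exact: leB0_refl.
have ub0 : u b != 0 by apply: u_ne0; lia.
case: (ltgtP 0 (u b)) => hub.
- have [u' [hc hB' hf' hC' hm']] := alpha_step hBu hBw hfu hfw hC hb wb hub hmin.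
  apply: leB0_cons hc _; apply: IH => //; lia.
- have [u' [hc hB' hf' hC' hm']] := beta_step hBu hBw hfu hfw hC hb wb hub hmin.
  apply: leB0_cons hc _; apply: IH => //; lia.
- by rewrite -hub eqxx in ub0.
Qed.

Lemma Cond_CondB (u w : int -> int) : Cond u w -> CondB u w.
Proof.
case=> h1 h2 h3; split => // c d hc hcd; apply: h3; lia.
Qed.

Unset Implicit Arguments.

Theorem theorem2p2 (u w : sperm) :
  isB u -> isB w -> (leB0 u w <-> leS0 u w).
Proof.
move=> hBu hBw; split; first exact: leB_leS.
move=> h; have hC := Cond_CondB (leS0_cond h).
set N := maxn (sbound u) (sbound w).
apply: (dir2 hBw (N := N) _ (n := meas u w N)) => //.
- by apply: sperm_fixo; rewrite /N leq_maxr.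
- by apply: sperm_fixo; rewrite /N leq_maxl.
Qed.
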